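(* Let $(M^{4n},g)$ be a quaternionic Kähler manifold and $r$ an integer with $n+2r\geq 0$. The Chern character of $\mathrm{Sym}^{n+2r}H$ is $$\mathrm{ch}\,\mathrm{Sym}^{n+2r}H\;=\;\sum_{l\geq 0}\frac{2^{2l+1}}{(2l+1)!}\,B_{2l+1}\!\left(r+\frac{n+2}{2}\right)u^l,$$ where $u:=p_1(H)$ and $B_{2l+1}(x)$ is the $(2l+1)$-th Bernoulli polynomial.
   Context: A quaternionic Kähler manifold is a Riemannian $4n$-manifold with holonomy in $\mathbf{Sp}(1)\cdot\mathbf{Sp}(n)$; $H$ is the (locally defined) rank-2 bundle associated to the standard representation of $\mathbf{Sp}(1)$. Characteristic classes are computed formally via the splitting principle: $H=\ell\oplus\ell^{-1}$ with $c_1(\ell)=\pm\sqrt{u}$, i.e. $u=p_1(H)=c_1(\ell)^2$; equivalently $4u=p_1(\mathrm{Sym}^2H)$, which is a globally defined class. Bernoulli polynomials are characterized by $B_{\mu+1}(w+1)-B_{\mu+1}(w)=(\mu+1)w^\mu$ together with the standard normalization $B_k(x)=x^k-\frac12\binom k1x^{k-1}+\frac16\binom k2x^{k-2}-\dots$. *)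

(* Defs.v *)
From mathcomp Require Import all_boot all_order all_algebra.
Set Implicit Arguments. Unset Strict Implicit. Unset Printing Implicit Defensive.
Import Order.TTheory GRing.Theory Num.Theory.
Local Open Scope ring_scope.

(* Bernoulli numbers b_0 = 1, sum_{j<=k} C(k+1,j) b_j = 0 for k >= 1,
   i.e. b_k = -1/(k+1) * sum_{j<k} C(k+1,j) b_j  (so b_1 = -1/2). *)
Fixpoint bern_seq (k : nat) : seq rat :=
  match k with
  | 0 => [:: 1]
  | k'.+1 =>
      let s := bern_seq k' in
      rcons s (- (k'.+2%:R)^-1 * \sum_(j < k'.+1) ('C(k'.+2, j))%:R * nth 0 s j)
  end.

Definition bernoulli_number (k : nat) : rat := nth 0 (bern_seq k) k.

Definition bernoulli_poly (k : nat) : {poly rat} :=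
  \sum_(j < k.+1) (('C(k, j))%:R * bernoulli_number j) *: 'X^(k - j).

(* Splitting principle: H = l + l^{-1}, x := c_1(l), u = p_1(H) = x^2.
   Sym^m H = sum_{k=0}^m l^{m-2k}, whose Chern roots are (m - 2k) x. *)
Definition sym_chern_roots (m : nat) : seq int :=
  [seq (m%:Z - 2 * k%:Z) | k <- iota 0 m.+1].

(* ch Sym^m H = sum over Chern roots w x of exp(w x), as a formal power
   series in x; this is its coefficient of x^j. *)
Definition ch_Sym_coef (m j : nat) : rat :=
  (\sum_(w <- sym_chern_roots m) (w%:~R : rat) ^+ j) / (j`!)%:R.

(* Main.v *)
Require Import Defs.
From mathcomp Require Import all_boot all_order all_algebra ring.
Import Order.TTheory GRing.Theory Num.Theory.
Local Open Scope ring_scope.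

Notation b := bernoulli_number.
Notation B := bernoulli_poly.


Lemma size_bern_seq k : size (bern_seq k) = k.+1.
Proof. by elim: k => //= k IH; rewrite size_rcons IH. Qed.

Lemma nth_bern_seq k j : (j <= k)%N -> nth 0 (bern_seq k) j = b j.
Proof.
elim: k => [|k IH]; first by rewrite leqn0 => /eqP ->.
rewrite leq_eqVlt => /orP [/eqP -> //| hj].
by rewrite /= nth_rcons size_bern_seq hj IH.
Qed.

Lemma bern_succ k : b k.+1 =
  - (k.+2%:R)^-1 * \sum_(j < k.+1) ('C(k.+2, j))%:R * b j.
Proof.
rewrite {1}/bernoulli_number /= nth_rcons size_bern_seq ltnn eqxx.
congr (_ * _); apply: eq_bigr => j _; rewrite nth_bern_seq //.
by rewrite -ltnS.
Qed.

Lemma bern_rec N : (2 <= N)%N -> \sum_(j < N) ('C(N, j))%:R * b j = 0.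
Proof.
case: N => [|[|k]] // _.
rewrite big_ord_recr /= binSn bern_succ.
set S := \sum_(_ < _) _.
rewrite mulrA mulrN mulrV ?mulN1r ?subrr //.
by rewrite unitfE pnatr_eq0.
Qed.

Lemma b0 : b 0 = 1. Proof. by []. Qed.

Lemma B_hornerE K x : (B K).[x] = \sum_(j < K.+1) ('C(K, j))%:R * b j * x ^+ (K - j).
Proof.
rewrite /bernoulli_poly horner_sum; apply: eq_bigr => j _.
by rewrite hornerZ hornerXn.
Qed.

Lemma B_at0 K : (B K).[0] = b K.
Proof.
rewrite B_hornerE big_ord_recr /= subnn expr0 binn mulr1 mul1r big1 ?add0r //.
move=> j _; rewrite expr0n subn_eq0 leqNgt ltn_ord /= mulr0 //.
Qed.

Lemma B_at1 K : (B K).[1] = b K + (K == 1%N)%:R.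
Proof.
rewrite B_hornerE.
under eq_bigr do rewrite expr1n mulr1.
case: K => [|[|k]].
- by rewrite big_ord_recr big_ord0 /= add0r addr0 bin0 mul1r.
- rewrite !big_ord_recr big_ord0 /= add0r bin1 bin0 !mul1r b0.
  by rewrite addrC.
- rewrite big_ord_recr /= bern_rec // add0r.
  by rewrite binn mul1r addr0.
Qed.


Lemma B_deriv K : (B K.+1)^`() = K.+1%:R *: B K.
Proof.
rewrite /bernoulli_poly raddf_sum big_ord_recr /= subnn expr0 derivZ derivC scaler0 addr0.
rewrite scaler_sumr; apply: eq_bigr => j _.
rewrite derivZ derivXn scalerA -scaler_nat scalerA; congr (_ *: 'X^_).
  rewrite mulrAC -natrM mulrA -natrM; congr (_%:R * _).
  have := mul_bin_down K.+1 j; rewrite /= => ->; by rewrite mulnC.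
by rewrite subSn ?ltnS // -ltnS.
Qed.

Lemma deriv0_const (p : {poly rat}) : p^`() = 0 -> p = (p.[0])%:P.
Proof.
move=> h; apply/polyP => i; rewrite coefC horner_coef0.
case: i => [//|i] /=.
have := congr1 (fun q : {poly rat} => q`_i) h; rewrite coef_deriv coef0 => /eqP.
by rewrite mulrn_eq0 /= => /eqP.
Qed.

Lemma B0 : B 0 = 1.
Proof. by rewrite /bernoulli_poly big_ord1 /= bin0 mul1r b0 expr0 scale1r. Qed.

Definition Dp K := B K \Po ('X + 1) - B K - 'X^(K.-1) *+ K.

Lemma Dp_deriv K : (Dp K.+1)^`() = Dp K *+ K.+1.
Proof.
rewrite /Dp !derivB deriv_comp derivD derivX derivC addr0 mulr1 B_deriv.
rewrite comp_polyZ derivMn derivXn /= -!scaler_nat.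
by rewrite !scalerBr.
Qed.

Lemma Dp0 K : Dp K = 0.
Proof.
elim: K => [|K IH].
  by rewrite /Dp B0 comp_polyC subrr mulr0n subr0.
have := Dp_deriv K; rewrite IH mul0rn => /deriv0_const ->.
rewrite /Dp !(hornerD, hornerN, hornerMn, hornerXn, horner_comp, hornerX, hornerC) add0r B_at1 B_at0 /=.
case: K {IH} => [|K] /=; first by rewrite expr0; apply/eqP; rewrite polyC_eq0; apply/eqP; ring.
by rewrite expr0n /= mul0rn; apply/eqP; rewrite polyC_eq0; apply/eqP; ring.
Qed.

Lemma B_diff K x : (B K).[x + 1] - (B K).[x] = x ^+ K.-1 *+ K.
Proof.
have := congr1 (fun p => p.[x]) (Dp0 K).
rewrite /Dp !(hornerD, hornerN, hornerMn, hornerXn, horner_comp, hornerX, hornerC) => /eqP.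
by rewrite subr_eq0 => /eqP.
Qed.

Lemma signK k : (-1) ^+ k * (-1) ^+ k = 1 :> rat.
Proof. elim: k => [|k IH]; first by rewrite expr0 mulr1. rewrite exprS; transitivity ((-1) * (-1) * ((-1) ^+ k * (-1) ^+ k) : rat); first ring. by rewrite IH mulr1 mulrNN mulr1. Qed.

Definition Pp K := (-1) ^+ K *: (B K \Po (1 - 'X)) - B K.

Lemma Pp_horner K y : (Pp K).[y] = (-1) ^+ K * (B K).[1 - y] - (B K).[y].
Proof. by rewrite /Pp !(hornerD, hornerN, hornerZ, horner_comp, hornerX, hornerC). Qed.

Lemma Pp_periodic K x : (Pp K).[x + 1] = (Pp K).[x].
Proof.
rewrite !Pp_horner.
have h1 := B_diff K x. have h2 := B_diff K (- x).
have -> : 1 - (x + 1) = - x by ring.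
have -> : 1 - x = - x + 1 by ring.
move: h1 h2; case: K => [|k] /=.
  by rewrite !mulr0n => /eqP; rewrite subr_eq0 => /eqP -> /eqP; rewrite subr_eq0 => /eqP ->.
move=> /eqP; rewrite subr_eq => /eqP -> /eqP; rewrite subr_eq => /eqP ->.
rewrite (exprNn x) exprS.
have hs := signK k. move: ((-1) ^+ k) hs => e hs.
apply/eqP; rewrite -subr_eq0.
match goal with |- is_true (?L - ?R == 0) =>
  have -> : L - R = (e * e - 1) * (x ^+ k *+ k.+1) by ring end.
by rewrite hs subrr mul0r.
Qed.

Lemma periodic_const (p : {poly rat}) :
  (forall x, p.[x + 1] = p.[x]) -> p = (p.[0])%:P.
Proof.
move=> hp; apply/eqP; rewrite -subr_eq0; apply/negPn/negP => hq.
set q := p - _ in hq.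
have hr : forall n : nat, q.[n%:R] = 0.
  move=> n; rewrite /q hornerD hornerN hornerC; apply/eqP; rewrite subr_eq0; apply/eqP.
  elim: n => [//|n IH]; by rewrite -addn1 natrD hp.
have := max_poly_roots hq (rs := [seq i%:R | i <- iota 0 (size q)]).
rewrite size_map size_iota ltnn => h; apply: notF; apply: h.
  by apply/allP => y /mapP [i _ ->]; rewrite /root hr.
by rewrite map_inj_uniq ?iota_uniq // => i j /eqP; rewrite eqr_nat => /eqP.
Qed.

Lemma Pp_deriv K : (Pp K.+1)^`() = K.+1%:R *: Pp K.
Proof.
rewrite /Pp derivB derivZ deriv_comp B_deriv comp_polyZ derivB derivC derivX sub0r mulrN1.
rewrite scalerBr; congr (_ - _).
by rewrite scalerN -scaleNr exprS mulN1r opprK !scalerA mulrC.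
Qed.

Lemma Pp0 K : Pp K = 0.
Proof.
have := Pp_deriv K.
rewrite [Pp K.+1](@periodic_const _ (Pp_periodic K.+1)) derivC => /eqP.
by rewrite eq_sym scaler_eq0 pnatr_eq0 /= => /eqP.
Qed.

Lemma B_refl K y : (B K).[1 - y] = (-1) ^+ K * (B K).[y].
Proof.
have := congr1 (fun p : {poly rat} => p.[y]) (Pp0 K).
rewrite /= Pp_horner hornerC => /eqP; rewrite subr_eq0 => /eqP <-.
by rewrite mulrA signK mul1r.
Qed.


Lemma tele x j m : \sum_(k < m) (x + k%:R) ^+ j *+ j.+1
   = (B j.+1).[x + m%:R] - (B j.+1).[x].
Proof.
elim: m => [|m IH]; first by rewrite big_ord0 addr0 subrr.
have -> : (m.+1)%:R = m%:R + 1 :> rat by rewrite -addn1 natrD.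
rewrite big_ord_recr /= IH addrA -(B_diff j.+1 (x + m%:R)) /=; ring.
Qed.

Lemma S_eq m j : \sum_(w <- sym_chern_roots m) (w%:~R : rat) ^+ j
   = \sum_(k < m.+1) (m%:R - 2 * k%:R) ^+ j.
Proof.
rewrite /sym_chern_roots big_map -[iota 0 m.+1]/(index_iota 0 m.+1) big_mkord.
apply: eq_bigr => k _; rewrite intrD intrN intrM //.
Qed.

Lemma S_main m j (y := m%:R / 2 + 1 : rat) :
  (\sum_(w <- sym_chern_roots m) (w%:~R : rat) ^+ j) * j.+1%:R
   = (-2) ^+ j * (1 + (-1) ^+ j) * (B j.+1).[y].
Proof.
rewrite S_eq.
have -> : \sum_(k < m.+1) (m%:R - 2 * k%:R) ^+ j
   = \sum_(k < m.+1) (-2) ^+ j * ((1 - y) + k%:R) ^+ j.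
  apply: eq_bigr => k _; rewrite -exprMn; congr (_ ^+ _); by rewrite /y; field.
rewrite -mulr_sumr -mulrA mulr_natr -mulrnAr -sumrMnl (tele (1 - y) j m.+1).
have -> : (m.+1)%:R = m%:R + 1 :> rat by rewrite -addn1 natrD.
have -> : 1 - y + (m%:R + 1) = y by rewrite /y; field.
rewrite B_refl exprS; ring.
Qed.


Theorem lemma2p1 (n : nat) (r : int) (hnr : 0 <= n%:Z + 2 * r) :
  forall l : nat,
    ch_Sym_coef (absz (n%:Z + 2 * r)) l.*2
      = (2 ^+ l.*2.+1 / (l.*2.+1)`!%:R)
        * (bernoulli_poly l.*2.+1).[r%:~R + (n%:R + 2) / 2]
    /\ ch_Sym_coef (absz (n%:Z + 2 * r)) l.*2.+1 = 0.
Proof.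
move=> l; set m := absz _.
have hm : (m%:R : rat) = n%:R + 2 * r%:~R.
  have hz : (m%:Z) = n%:Z + 2 * r by rewrite /m gez0_abs.
  have := congr1 (fun z : int => (z%:~R : rat)) hz.
  by rewrite intrD intrM /=.
have hy : r%:~R + (n%:R + 2) / 2 = m%:R / 2 + 1 :> rat by rewrite hm; field.
rewrite hy /ch_Sym_coef.
have hf : forall k, (k`!)%:R != 0 :> rat by move=> k; rewrite pnatr_eq0 -lt0n fact_gt0.
have hs : forall k, (k.+1)%:R != 0 :> rat by move=> k; rewrite pnatr_eq0.
have hsign : (-1) ^+ l.*2 = 1 :> rat by rewrite -mul2n exprM sqrrN !expr1n.
split.
  have := S_main m l.*2.
  move/(congr1 (fun z => z / (l.*2.+1)%:R)); rewrite mulfK // => ->.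
  rewrite hsign factS natrM -mul2n exprS !exprM sqrrN.
  have := hs (2 * l)%N; have := hf (2 * l)%N.
  move: (2 ^+ 2 ^+ l) ((B (2 * l).+1).[m%:R / 2 + 1]) ((2 * l).+1%:R) ((2 * l)`!%:R) => P Q U V hV hU.
  by field; rewrite hU hV.
have := S_main m l.*2.+1.
rewrite [(-1) ^+ _.+1]exprS hsign mulr1 subrr mulr0 /= mul0r => /eqP; rewrite mulf_eq0 (negbTE (hs _)) orbF => /eqP ->.
by rewrite mul0r.
Qed.
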